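(* Let $m,n\ge2$ be integers and let $H$ be the graph on the vertex set $\{x_{i,j}: i\in[m], j\in[n]\}$ with edge set $\{\{x_{i,j},x_{i',j+1}\}: 1\le i<i'\le m,\ 1\le j\le n-1\}$. Then $H$ is a chordal bipartite graph.
   Context: A bipartite graph is chordal bipartite if every cycle of length at least six has a chord. *)

(* Defs.v *)
From mathcomp Require Import all_boot.
Set Implicit Arguments. Unset Strict Implicit. Unset Printing Implicit Defensive.

Definition bipartite (T : finType) (e : rel T) : Prop :=
  exists c : T -> bool, forall x y, e x y -> c x != c y.

(* A cycle of length k = size s: the k vertices of s are pairwise distinct
   and consecutive ones (cyclically, via mathcomp's [cycle]) are adjacent. *)
Definition is_graph_cycle (T : finType) (e : rel T) (s : seq T) : Prop :=
  [/\ 3 <= size s, uniq s & cycle e s].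

Definition has_chord (T : finType) (e : rel T) (s : seq T) : Prop :=
  exists x y, [/\ x \in s, y \in s, e x y, y != next s x & x != next s y].

Definition chordal_bipartite (T : finType) (e : rel T) : Prop :=
  bipartite e /\
  forall s : seq T, is_graph_cycle e s -> 6 <= size s -> has_chord e s.

(* The graph H on vertices x_{i,j}, i in [m], j in [n] (0-indexed as
   'I_m * 'I_n): x_{i,j} ~ x_{i',j+1} whenever i < i'  (symmetrised). *)
Definition adjH (m n : nat) : rel ('I_m * 'I_n) :=
  fun x y =>
    ((y.2 == x.2.+1 :> nat) && (x.1 < y.1)) ||
    ((x.2 == y.2.+1 :> nat) && (y.1 < x.1)).
Arguments adjH m n : clear implicits.

(* Main.v *)
Require Import Defs.
From mathcomp Require Import all_boot zify.
From Stdlib Require Import Lia PeanoNat.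

Definition adjn (p1 p2 q1 q2 : nat) := ((q2 = p2+1 /\ p1<q1) \/ (p2 = q2+1 /\ q1<p1))%coq_nat.

Lemma core a1 a2 b1 b2 c1 c2 d1 d2 f1 f2 :
  adjn a1 a2 b1 b2 -> adjn b1 b2 c1 c2 -> adjn c1 c2 d1 d2 -> adjn d1 d2 f1 f2 ->
  (a2 <= c2 /\ (a2 = c2 -> c1 <= a1))%coq_nat -> (b2 <= c2 /\ (b2 = c2 -> c1 <= b1))%coq_nat ->
  (d2 <= c2 /\ (d2 = c2 -> c1 <= d1))%coq_nat -> (f2 <= c2 /\ (f2 = c2 -> c1 <= f1))%coq_nat ->
  (a1 <> c1 \/ a2 <> c2) -> (f1 <> c1 \/ f2 <> c2) ->
  adjn b1 b2 f1 f2 \/ adjn a1 a2 d1 d2.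
Proof. unfold adjn.
intros [[? ?]|[? ?]] [[? ?]|[? ?]] [[? ?]|[? ?]] [[? ?]|[? ?]] [? Ha] [? Hb] [? Hd] [? Hf] Hac Hfc;
  try lia.
all: subst.
all: destruct (Compare_dec.lt_eq_lt_dec b1 d1) as [[?|?]|?]; try lia.
Qed.

Section Main.
Variables m n : nat.
Local Notation V := ('I_m * 'I_n)%type.

Lemma adjHP (x y : V) : adjH m n x y <-> adjn x.1 x.2 y.1 y.2.
Proof.
rewrite /adjH /adjn; split.
  case/orP=> /andP[/eqP h1 /ltP h2]; [left|right]; split => //; lia.
case=> -[h1 h2]; apply/orP; [left|right]; apply/andP; split;
  try (apply/eqP; lia); exact/ltP.
Qed.

Lemma adjH_sym (x y : V) : adjH m n x y = adjH m n y x.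
Proof. by rewrite /adjH orbC. Qed.

Lemma pair_neq (x y : V) : x != y -> (x.1 : nat) <> y.1 \/ (x.2 : nat) <> y.2.
Proof.
case: x y => [x1 x2] [y1 y2] /= hne.
case: (eqVneq (x1 : nat) y1) => [/val_inj e1|/eqP]; last by left.
case: (eqVneq (x2 : nat) y2) => [/val_inj e2|/eqP]; last by right.
by rewrite e1 e2 eqxx in hne.
Qed.

Definition key (x : V) := x.2 * m + (m - x.1).

Lemma key_lex (x y : V) : key y <= key x ->
  (y.2 <= x.2 /\ ((y.2 : nat) = x.2 -> x.1 <= y.1))%coq_nat.
Proof.
rewrite /key => h.
have hx := ltn_ord x.1; have hy := ltn_ord y.1.
have le1 : y.2 <= x.2.
  rewrite leqNgt; apply/negP => hlt.
  have : x.2.+1 * m <= y.2 * m by rewrite leq_mul2r hlt orbT.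
  rewrite mulSn; lia.
split; first exact/leP.
move=> e; rewrite e in h; apply/leP; lia.
Qed.

Ltac neqt U := let E := fresh "E" in apply/eqP; intro E; move: U; rewrite ?E /= !inE ?eqxx /= ?orbT ?andbF //.

Lemma chord_concrete (u' u v w w' z : V) r :
  uniq [:: u', u, v, w, w', z & r] ->
  adjH m n u' u -> adjH m n u v -> adjH m n v w -> adjH m n w w' ->
  (forall y, y \in [:: u'; u; w; w'] -> key y <= key v) ->
  has_chord (adjH m n) [:: u', u, v, w, w', z & r].
Proof.
move=> U h1 h2 h3 h4 hmax.
have n1 : u != u' by neqt U.
have n2 : w != u' by neqt U.
have n3 : w != u by neqt U.
have n4 : w != v by neqt U.
have n5 : w' != u' by neqt U.
have n6 : w' != u by neqt U.
have n7 : w' != v by neqt U.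
have n8 : w' != w by neqt U.
have n9 : u != z by neqt U.
have n10 : u' != v by neqt U.
have nu : next [:: u', u, v, w, w', z & r] u = v by rewrite /= (negbTE n1) eqxx.
have nw : next [:: u', u, v, w, w', z & r] w = w'
  by rewrite /= (negbTE n2) (negbTE n3) (negbTE n4) eqxx.
have nu' : next [:: u', u, v, w, w', z & r] u' = u by rewrite /= eqxx.
have nw' : next [:: u', u, v, w, w', z & r] w' = z
  by rewrite /= (negbTE n5) (negbTE n6) (negbTE n7) (negbTE n8) eqxx.
have M y : y \in [:: u'; u; w; w'] -> (y.2 <= v.2 /\ ((y.2 : nat) = v.2 -> v.1 <= y.1))%coq_nat.
  by move=> /hmax /key_lex.
have := @core _ _ _ _ _ _ _ _ _ _ (proj1 (adjHP _ _) h1) (proj1 (adjHP _ _) h2) (proj1 (adjHP _ _) h3)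
  (proj1 (adjHP _ _) h4) (M u' _) (M u _) (M w _) (M w' _) (@pair_neq _ _ n10) (@pair_neq _ _ n7).
rewrite !inE !eqxx ?orbT => /(_ isT isT isT isT).
case=> /adjHP H.
  exists u, w'; split => //; rewrite ?inE ?eqxx ?orbT // ?nu ?nw' //.

exists u', w; split => //; rewrite ?inE ?eqxx ?orbT // ?nu' ?nw //.
by rewrite eq_sym.
Qed.

Lemma chord_rot k (s : seq V) : uniq s ->
  has_chord (adjH m n) (rot k s) -> has_chord (adjH m n) s.
Proof.
move=> U [x [y [hx hy hxy h1 h2]]]; exists x, y.
by rewrite -(mem_rot k) -(mem_rot k s y) -(next_rot k U x) -(next_rot k U y).
Qed.

Lemma main_chord (s : seq V) : is_graph_cycle (adjH m n) s -> 6 <= size s ->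
  has_chord (adjH m n) s.
Proof.
case=> _ U C S.
case: s U C S => [|x0 s0] // U C S.
set s := x0 :: s0 in U C S *.
have x0s : x0 \in s by rewrite inE eqxx.
case: (arg_maxnP key x0s) => v vs vmax.
case: (rot_to vs) => i t E.
apply: (@chord_rot i _ U); rewrite E.
have U1 : uniq (v :: t) by rewrite -E rot_uniq.
have C1 : cycle (adjH m n) (v :: t) by rewrite -E rot_cycle.
have S1 : 6 <= size (v :: t) by rewrite -E size_rot.
have M1 y : y \in v :: t -> key y <= key v by rewrite -E mem_rot => /vmax.
clear E; move: U1 C1 S1 M1; case/lastP: t => [|t1 u] //; case/lastP: t1 => [|t2 u'].
  by rewrite /= ltnS.
case: t2 => [|w [|w' [|z r]]] //; try by rewrite /= !size_rcons.
move=> U1 C1 S1 M1.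
have Eq : v :: rcons (rcons [:: w, w', z & r] u') u = (v :: [:: w, w', z & r]) ++ [:: u'; u].
  by rewrite -!cats1 -catA.
rewrite Eq in U1 C1 M1 *.
apply: (@chord_rot (size (v :: [:: w, w', z & r])) _ U1).
rewrite rot_size_cat.
have U2 : uniq ([:: u'; u] ++ v :: [:: w, w', z & r]).
  by rewrite -rot_size_cat rot_uniq.
have C2 : cycle (adjH m n) ([:: u'; u] ++ v :: [:: w, w', z & r]).
  by rewrite -rot_size_cat rot_cycle.
move: C2; rewrite /= => /andP[h1 /andP[h2 /andP[h3 /andP[h4 _]]]].
apply: chord_concrete => // y hy; apply: M1.
by move: hy; rewrite !inE mem_cat !inE; case/or4P => ->; rewrite ?orbT.
Qed.

End Main.

Theorem lemma3p4 (m n : nat) :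
  2 <= m -> 2 <= n -> chordal_bipartite (adjH m n).
Proof.
move=> _ _; split; last exact: main_chord.
exists (fun x : 'I_m * 'I_n => odd x.2) => x y.
by case/orP => /andP[/eqP -> _] /=; rewrite ?negbK; case: (odd _).
Qed.
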